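(* Under the hypotheses of the FTRL regret setting in the context (non-negative losses $\ell_k\in\mathbb R^A$; $0<\alpha_1\le1$, $\eta_1=\eta_2(1-\alpha_1)$; for $k\ge2$, $0<\alpha_k<1$ and $0<\eta_{k+1}(1-\alpha_k)\le\eta_k$), define for $k\ge1$ the auxiliary distribution $\pi_{k+1}^-(a)=\exp(-\widehat\eta_kL_k(a))/\sum_{a'}\exp(-\widehat\eta_kL_k(a'))$. Then for every $n\ge1$, $$R_n\le\sum_{k=1}^n\alpha_k^n\langle\pi_k-\pi_{k+1}^-,\ell_k\rangle+\frac{\log A}{\eta_{n+1}}.$$
   Context: Online weighted linear optimization over $\mathcal A=\{1,\dots,A\}$: given $\{\alpha_k\}\subset(0,1]$, let $\alpha_i^k=\alpha_i\prod_{j=i+1}^k(1-\alpha_j)$ for $i<k$, $\alpha_k^k=\alpha_k$. Define $L_0=0$ and $L_k=(1-\alpha_k)L_{k-1}+\alpha_k\ell_k=\sum_{i=1}^k\alpha_i^k\ell_i$. FTRL iterates: $\pi_k(a)=\exp(-\eta_kL_{k-1}(a))/\sum_{a'}\exp(-\eta_kL_{k-1}(a'))$, $k\ge1$. $\widehat\eta_1=\eta_2$ and $\widehat\eta_k=\eta_k/(1-\alpha_k)$ for $k>1$. Regret: $R_n=\max_{a}\{\sum_{k=1}^n\alpha_k^n\langle\pi_k,\ell_k\rangle-\sum_{k=1}^n\alpha_k^n\ell_k(a)\}$. *)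

(* Defs.v *)
From mathcomp Require Import all_boot all_order all_algebra.
From mathcomp Require Import all_classical all_reals.
From mathcomp.analysis Require Import sequences exp.
Set Implicit Arguments. Unset Strict Implicit. Unset Printing Implicit Defensive.
Import Order.TTheory GRing.Theory Num.Theory.
Local Open Scope ring_scope.

(* Actions are 'I_A (= {1,...,A} shifted to {0,...,A-1}).
   Rounds are indexed by nat starting at 1: alpha k, eta k, ell k for k >= 1. *)

Definition wgt (R : realType) (alpha : nat -> R) (i k : nat) : R :=
  alpha i * \prod_(i.+1 <= j < k.+1) (1 - alpha j).

Fixpoint cumloss (R : realType) (A : nat) (alpha : nat -> R)
    (ell : nat -> 'I_A -> R) (k : nat) (a : 'I_A) : R :=
  match k with
  | 0 => 0
  | k'.+1 => (1 - alpha k) * cumloss alpha ell k' a + alpha k * ell k a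
  end.

Definition dot (R : realType) (A : nat) (p l : 'I_A -> R) : R :=
  \sum_(a < A) p a * l a.

Definition softmax (R : realType) (A : nat) (e : R) (L : 'I_A -> R) (a : 'I_A) : R :=
  expR (- (e * L a)) / \sum_(b < A) expR (- (e * L b)).

Definition ftrl_pi (R : realType) (A : nat) (alpha eta : nat -> R)
    (ell : nat -> 'I_A -> R) (k : nat) : 'I_A -> R :=
  softmax (eta k) (cumloss alpha ell k.-1).

Definition etahat (R : realType) (alpha eta : nat -> R) (k : nat) : R :=
  if k == 1%N then eta 2%N else eta k / (1 - alpha k).

Definition pi_minus_next (R : realType) (A : nat) (alpha eta : nat -> R)
    (ell : nat -> 'I_A -> R) (k : nat) : 'I_A -> R :=
  softmax (etahat alpha eta k) (cumloss alpha ell k).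

Definition maxs (R : realType) (s : seq R) : R :=
  \big[Num.max/head 0 s]_(x <- s) x.

Definition regret (R : realType) (A : nat) (alpha eta : nat -> R)
    (ell : nat -> 'I_A -> R) (n : nat) : R :=
  maxs [seq (\sum_(1 <= k < n.+1) wgt alpha k n * dot (ftrl_pi alpha eta ell k) (ell k))
            - (\sum_(1 <= k < n.+1) wgt alpha k n * ell k a) | a <- enum 'I_A].

(* Main.v *)
Require Import Defs.
From mathcomp Require Import all_boot all_order all_algebra.
From mathcomp Require Import all_classical all_reals.
From mathcomp.analysis Require Import sequences exp.
From mathcomp Require Import ring lra.
Import Order.TTheory GRing.Theory Num.Theory.
Local Open Scope ring_scope.
Set Implicit Arguments. Unset Strict Implicit.

Lemma ln_le_sub1 (R : realType) (x : R) : 0 < x -> ln x <= x - 1.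
Proof.
move=> x0; have := @le_ln1Dx R (x - 1).
have -> : 1 + (x - 1) = x by ring.
apply; lra.
Qed.

Definition Ent (R : realType) (A : nat) (p : 'I_A -> R) : R :=
  \sum_(a < A) p a * ln (p a).

Lemma KL (R : realType) (A : nat) (p q : 'I_A -> R) :
  (forall a, 0 < p a) -> (forall a, 0 < q a) ->
  \sum_(a < A) p a = 1 -> \sum_(a < A) q a = 1 ->
  \sum_(a < A) p a * ln (q a) <= Ent p.
Proof.
move=> p0 q0 sp sq; rewrite -subr_ge0 /Ent -sumrB.
apply: (@le_trans _ _ (\sum_(a < A) (p a - q a))).
  by rewrite sumrB sp sq subrr.
apply: ler_sum => a _.
have h := ln_le_sub1 (divr_gt0 (q0 a) (p0 a)).
rewrite ln_div ?posrE // in h.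
have pa := p0 a.
have : p a * (ln (q a) - ln (p a)) <= p a * (q a / p a - 1).
  by rewrite ler_pM2l.
rewrite mulrBr mulrBr mulr1 mulrCA divff ?mulr1; last by rewrite gt_eqF.
lra.
Qed.

Definition Zs (R : realType) (A : nat) (e : R) (L : 'I_A -> R) : R :=
  \sum_(b < A) expR (- (e * L b)).

Lemma Zs_gt0 (R : realType) (A : nat) (e : R) (L : 'I_A -> R) :
  (0 < A)%N -> 0 < Zs e L.
Proof.
move=> A0; rewrite /Zs (bigD1 (Ordinal A0)) //=.
apply: ltr_pwDl; first exact: expR_gt0.
by apply: sumr_ge0 => i _; apply: ltW; exact: expR_gt0.
Qed.

Lemma softmax_gt0 (R : realType) (A : nat) (e : R) (L : 'I_A -> R) a :
  0 < softmax e L a.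
Proof.
have A0 := leq_ltn_trans (leq0n a) (ltn_ord a).
by rewrite /softmax divr_gt0 ?expR_gt0 // (Zs_gt0 e L A0).
Qed.

Lemma softmax_sum1 (R : realType) (A : nat) (e : R) (L : 'I_A -> R) :
  (0 < A)%N -> \sum_(a < A) softmax e L a = 1.
Proof.
move=> A0; rewrite /softmax -mulr_suml divff //.
by rewrite gt_eqF // (Zs_gt0 e L A0).
Qed.

Lemma ln_softmax (R : realType) (A : nat) (e : R) (L : 'I_A -> R) a :
  ln (softmax e L a) = - (e * L a) - ln (Zs e L).
Proof.
have A0 := leq_ltn_trans (leq0n a) (ltn_ord a).
rewrite /softmax ln_div ?posrE ?expR_gt0 ?(Zs_gt0 e L A0) //.
by rewrite expRK.
Qed.

Lemma gibbs_id (R : realType) (A : nat) (e : R) (L p : 'I_A -> R) :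
  (0 < A)%N -> 0 < e -> \sum_(a < A) p a = 1 ->
  dot p L + Ent p / e =
  - ln (Zs e L) / e + (Ent p - \sum_(a < A) p a * ln (softmax e L a)) / e.
Proof.
move=> A0 e0 sp.
have -> : \sum_(a < A) p a * ln (softmax e L a) = - (e * dot p L) - ln (Zs e L).
  under eq_bigr => a _ do rewrite ln_softmax mulrBr mulrN.
  rewrite sumrB -mulr_suml sp mul1r sumrN /dot mulr_sumr.
  by congr (- _ - _); apply: eq_bigr => a _; ring.
have e1 : e != 0 by rewrite gt_eqF.
by field.
Qed.

Lemma gibbs_ineq (R : realType) (A : nat) (e : R) (L p : 'I_A -> R) :
  (0 < A)%N -> 0 < e -> (forall a, 0 < p a) -> \sum_(a < A) p a = 1 ->
  - ln (Zs e L) / e <= dot p L + Ent p / e.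
Proof.
move=> A0 e0 p0 sp; rewrite gibbs_id // lerDl.
apply: divr_ge0; last exact: ltW.
rewrite subr_ge0; apply: KL => //.
  exact: softmax_gt0.
exact: softmax_sum1.
Qed.

Lemma gibbs_eq (R : realType) (A : nat) (e : R) (L : 'I_A -> R) :
  (0 < A)%N -> 0 < e ->
  dot (softmax e L) L + Ent (softmax e L) / e = - ln (Zs e L) / e.
Proof.
move=> A0 e0; rewrite gibbs_id ?softmax_sum1 //.
by rewrite /Ent subrr mul0r addr0.
Qed.

Lemma Ent_lnA (R : realType) (A : nat) (p : 'I_A -> R) :
  (0 < A)%N -> (forall a, 0 < p a) -> \sum_(a < A) p a = 1 ->
  0 <= Ent p + ln A%:R.
Proof.
move=> A0 p0 sp.
have An : 0 < A%:R :> R by rewrite ltr0n.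
have q0 : forall a : 'I_A, 0 < (fun _ => A%:R^-1 : R) a by move=> _; rewrite invr_gt0.
have hs : \sum_(a < A) (A%:R^-1 : R) = 1.
  by rewrite sumr_const card_ord -[_ *+ A]mulr_natr mulVf ?gt_eqF.
have := @KL R A p (fun _ => A%:R^-1) p0 q0 sp hs. rewrite -mulr_suml sp mul1r lnV ?posrE //.
by rewrite -subr_ge0 opprK.
Qed.

Lemma wgt_rec (R : realType) (alpha : nat -> R) k n :
  (k <= n)%N -> wgt alpha k n.+1 = wgt alpha k n * (1 - alpha n.+1).
Proof. by move=> kn; rewrite /wgt big_nat_recr //= mulrA. Qed.

Lemma wgt_nn (R : realType) (alpha : nat -> R) n : wgt alpha n n = alpha n.
Proof. by rewrite /wgt big_geq // mulr1. Qed.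

Lemma wsum_rec (R : realType) (alpha : nat -> R) (f : nat -> R) n :
  \sum_(1 <= k < n.+2) wgt alpha k n.+1 * f k =
  (1 - alpha n.+1) * \sum_(1 <= k < n.+1) wgt alpha k n * f k + alpha n.+1 * f n.+1.
Proof.
rewrite big_nat_recr //= wgt_nn; congr (_ + _).
rewrite mulr_sumr; apply: eq_big_nat => k /andP [_ kn].
rewrite wgt_rec //. ring.
Qed.

Lemma cumloss_sum (R : realType) (A : nat) (alpha : nat -> R)
    (ell : nat -> 'I_A -> R) n a :
  cumloss alpha ell n a = \sum_(1 <= k < n.+1) wgt alpha k n * ell k a.
Proof.
elim: n => [|n IH]; first by rewrite big_geq.
by rewrite wsum_rec -IH.
Qed.

Lemma div_anti (R : realType) (c x y : R) : 0 < x -> x <= y -> 0 <= c -> c / y <= c / x.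
Proof.
move=> x0 xy c0; have y0 : 0 < y by apply: lt_le_trans xy.
rewrite ler_pdivrMr // -mulrA -{1}(mulr1 c); apply: ler_wpM2l => //.
by rewrite mulrC ler_pdivlMr // mul1r.
Qed.

Lemma dot_sub (R : realType) (A : nat) (f g l : 'I_A -> R) :
  dot (fun a => f a - g a) l = dot f l - dot g l.
Proof. by rewrite /dot -sumrB; apply: eq_bigr => a _; rewrite mulrBl. Qed.

Lemma dot_cum (R : realType) (A : nat) (alpha : nat -> R)
    (ell : nat -> 'I_A -> R) (p : 'I_A -> R) m :
  dot p (cumloss alpha ell m.+1) =
  (1 - alpha m.+1) * dot p (cumloss alpha ell m) + alpha m.+1 * dot p (ell m.+1).
Proof. by rewrite /dot !mulr_sumr -big_split; apply: eq_bigr => a _ /=; ring. Qed.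

Lemma dot_cum0 (R : realType) (A : nat) (alpha : nat -> R)
    (ell : nat -> 'I_A -> R) (p : 'I_A -> R) :
  dot p (cumloss alpha ell 0) = 0.
Proof. by rewrite /dot big1 // => a _; rewrite mulr0. Qed.

Lemma maxs_le (R : realType) (s : seq R) (B : R) :
  s != [::] -> (forall x, x \in s -> x <= B) -> maxs s <= B.
Proof.
case: s => [//|x s] _ h; rewrite /maxs big_seq /=.
apply: (big_ind (fun z => z <= B)) => //; first by apply: h; rewrite inE eqxx.
by move=> u v hu hv; rewrite ge_max hu hv.
Qed.

Theorem mainTheorem3 (R : realType) (A : nat) (alpha eta : nat -> R)
    (ell : nat -> 'I_A -> R) :
  (0 < A)%N ->
  (forall k a, (1 <= k)%N -> 0 <= ell k a) ->
  0 < alpha 1%N <= 1 ->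
  eta 1%N = eta 2%N * (1 - alpha 1%N) ->
  (forall k, (2 <= k)%N -> 0 < alpha k < 1) ->
  (forall k, (2 <= k)%N -> 0 < eta k.+1 * (1 - alpha k) <= eta k) ->
  forall n : nat, (1 <= n)%N ->
    regret alpha eta ell n <=
      \sum_(1 <= k < n.+1) wgt alpha k n *
          dot (fun a => ftrl_pi alpha eta ell k a - pi_minus_next alpha eta ell k a) (ell k)
      + ln (A%:R) / eta n.+1.
Proof.
move=> A0 _ /andP [a1p a1le] e1 hal het n n1.
have eta2 : 0 < eta 2%N.
  have /andP [h1 h2] := het 2%N (leqnn _).
  have /andP [h3 h4] := hal 2%N (leqnn _).
  apply: lt_le_trans h2; exact: h1.
have eh_pos : forall k, (1 <= k)%N -> 0 < etahat alpha eta k.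
  move=> [//|[|k]] _; first by rewrite /etahat.
  rewrite /etahat /=.
  have /andP [h1 h2] := het k.+2 isT.
  have /andP [h3 h4] := hal k.+2 isT.
  apply: divr_gt0; [apply: lt_le_trans h2; exact: h1 | lra].
have et_pos : forall k, (1 <= k)%N -> 0 < eta k.+1.
  move=> [//|[|k]] _ //.
  have /andP [h1 h2] := het k.+2 isT.
  have /andP [h3 h4] := hal k.+2 isT.
  nra.
have et_le : forall k, (1 <= k)%N -> eta k.+1 <= etahat alpha eta k.
  move=> [//|[|k]] _; first by rewrite /etahat.
  rewrite /etahat /=.
  have /andP [h1 h2] := het k.+2 isT.
  have /andP [h3 h4] := hal k.+2 isT.
  by rewrite ler_pdivlMr //; lra.
pose P m := pi_minus_next alpha eta ell m.
pose S m := \sum_(1 <= k < m.+1) wgt alpha k m * dot (P k) (ell k).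
pose Val m := dot (P m) (cumloss alpha ell m) + (Ent (P m) + ln A%:R) / etahat alpha eta m.
have Ppos : forall m a, 0 < P m a by move=> m a; exact: softmax_gt0.
have Psum : forall m, \sum_(a < A) P m a = 1 by move=> m; exact: softmax_sum1.
have EP : forall m, 0 <= Ent (P m) + ln A%:R by move=> m; exact: Ent_lnA.
have key : forall m, (1 <= m)%N -> S m <= Val m.
  elim=> [//|m IH] _.
  have [m0|m1] := eqVneq m 0%N.
    subst m; rewrite /S /Val big_nat1 wgt_nn dot_cum dot_cum0 mulr0 add0r.
    by rewrite lerDl; apply: divr_ge0 => //; exact: ltW.
  have m1' : (1 <= m)%N by rewrite lt0n.
  have IH' := IH m1'.
  rewrite /S wsum_rec -/(S m) /Val dot_cum.
  set p := P m.+1.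
  have /andP [ha1 ha2] := hal m.+1 (m1' : (1 < m.+1)%N).
  set a := alpha m.+1 in ha1 ha2 *.
  have e0 := eh_pos m m1'.
  have hv : Val m <= dot p (cumloss alpha ell m) + (Ent p + ln A%:R) / etahat alpha eta m.
    rewrite /Val !mulrDl !addrA.
    rewrite (gibbs_eq (cumloss alpha ell m) A0 e0).
    rewrite lerD2r.
    by apply: gibbs_ineq => //; [exact: Ppos | exact: Psum].
  have hd : (1 - a) * ((Ent p + ln A%:R) / etahat alpha eta m)
            <= (Ent p + ln A%:R) / etahat alpha eta m.+1.
    have -> : etahat alpha eta m.+1 = eta m.+1 / (1 - a).
      by rewrite /etahat; case: ifP => // /eqP [] /eqP; rewrite (negbTE m1).
    have -> : (Ent p + ln A%:R) / (eta m.+1 / (1 - a)) = ((1 - a) * (Ent p + ln A%:R)) / eta m.+1.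
      by rewrite invf_div; ring.
    rewrite mulrA.
    apply: div_anti; [exact: et_pos | exact: et_le | apply: mulr_ge0; [lra | exact: EP]].
  have hs : S m <= dot p (cumloss alpha ell m) + (Ent p + ln A%:R) / etahat alpha eta m.
    exact: le_trans IH' hv.
  have ha : 0 <= 1 - a by lra.
  have := ler_wpM2l ha hs.
  rewrite mulrDr => h.
  have := lerD (le_trans h (lerD (lexx _) hd)) (lexx (a * dot p (ell m.+1))).
  move=> h2; apply: le_trans h2 _.
  by rewrite -!addrA lerD2l addrC.
have hS := key n n1.
rewrite /regret; apply: maxs_le.
  by case: (enum 'I_A) (ltac:(by rewrite size_enum_ord) : size (enum 'I_A) = A) => //= h; rewrite -h in A0.
move=> x /mapP [a _ ->].
have -> : \sum_(1 <= k < n.+1) wgt alpha k n *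
          dot (fun a => ftrl_pi alpha eta ell k a - pi_minus_next alpha eta ell k a) (ell k)
   = \sum_(1 <= k < n.+1) wgt alpha k n * dot (ftrl_pi alpha eta ell k) (ell k) - S n.
  by rewrite /S -sumrB; apply: eq_bigr => k _; rewrite (dot_sub (ftrl_pi alpha eta ell k)) mulrBr.
rewrite -cumloss_sum.
suff : S n <= cumloss alpha ell n a + ln A%:R / eta n.+1 by lra.
apply: (le_trans hS).
rewrite /Val !mulrDl addrA (gibbs_eq (cumloss alpha ell n) A0 (eh_pos n n1)).
apply: lerD.
  have e0 := eh_pos n n1.
  rewrite ler_pdivrMr // mulrC -lerN2 opprK -mulNr.
  rewrite -[X in X <= _]expRK; apply: (@le_trans _ _ (ln (Zs (etahat alpha eta n) (cumloss alpha ell n)))).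
    rewrite ler_ln ?posrE ?expR_gt0 ?(Zs_gt0 _ _ A0) //.
    rewrite /Zs (bigD1 a) //= mulNr lerDl.
    by apply: sumr_ge0 => i _; apply: ltW; exact: expR_gt0.
  by rewrite lexx.
apply: div_anti; [exact: et_pos | exact: et_le |].
apply: ln_ge0; by rewrite ler1n.
Qed.
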